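(* For every $n\ge1$, $\lambda^{(0)}_{2n-1}\equiv0$, and $$\lambda^{(0)}_{2n}(t,c)=\frac{p_{2n}(\lambda_0,c)}{(4\lambda_0^3-c)^{5n-1}}$$ for some polynomial $p_{2n}\in\mathbb C[\lambda_0,c]$ whose degree in $\lambda_0$ is at most $9n-2$.
   Context: Let $\eta$ be a large parameter and $c\in\mathbb C$. The Hamiltonian system $(H_{\rm II})$: $\frac{d\lambda}{dt}=\eta\nu$, $\frac{d\nu}{dt}=\eta(2\lambda^3+t\lambda+c)$. Let $\lambda_0(t,c)$ be a branch of the algebraic function defined by $2\lambda_0^3+t\lambda_0+c=0$ (so $6\lambda_0^2+t=(4\lambda_0^3-c)/\lambda_0$). The 0-parameter solution is the unique pair of formal power series $\lambda^{(0)}=\sum_{k\ge0}\eta^{-k}\lambda^{(0)}_k(t,c)$, $\nu^{(0)}=\sum_{k\ge0}\eta^{-k}\nu^{(0)}_k(t,c)$ solving $(H_{\rm II})$ formally with $\lambda^{(0)}_0=\lambda_0$, $\nu^{(0)}_0=0$; equivalently $(6\lambda_0^2+t)\lambda^{(0)}_k+2\sum_{k_1+k_2+k_3=k,\,0\le k_j<k}\lambda^{(0)}_{k_1}\lambda^{(0)}_{k_2}\lambda^{(0)}_{k_3}=\frac{d^2\lambda^{(0)}_{k-2}}{dt^2}$ for $k\ge1$ (with $\lambda^{(0)}_{-1}=0$). *)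

(* Defs.v *)
From HB Require Import structures.
From mathcomp Require Import all_boot all_order all_algebra all_field.
Set Implicit Arguments. Unset Strict Implicit. Unset Printing Implicit Defensive.
Import Order.TTheory GRing.Theory Num.Theory.
Local Open Scope ring_scope.

(* Evaluation of a two-variable polynomial p(X, Y) with complex (algC)
   coefficients, represented as p : {poly {poly algC}} whose OUTER variable is X
   (so the degree in X is (size p).-1) and inner variable is Y, at a point
   (x, y) of a commutative algC-algebra R. *)
Definition eval2 (R : comUnitAlgType algC) (p : {poly {poly algC}}) (x y : R) : R :=
  (map_poly (fun q : {poly algC} => (map_poly (fun a : algC => a%:A) q).[y]) p).[x].

(* Main.v *)
Require Import Defs.
From HB Require Import structures.
From mathcomp Require Import all_boot all_order all_algebra all_field.
From mathcomp Require Import ring lra zify.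
Set Implicit Arguments. Unset Strict Implicit. Unset Printing Implicit Defensive.
Import Order.TTheory GRing.Theory Num.Theory.
Local Open Scope ring_scope.

Section S.
Variable (R : comUnitAlgType algC) (D : R -> R).
Hypothesis hDadd : forall x y : R, D (x + y) = D x + D y.
Hypothesis hDscale : forall (a : algC) (x : R), D (a *: x) = a *: D x.
Hypothesis hDmul : forall x y : R, D (x * y) = D x * y + x * D y.
Variables (t c l0 : R).
Hypothesis hDt : D t = 1.
Hypothesis hDc : D c = 0.
Hypothesis hl0 : 2 * l0 ^+ 3 + t * l0 + c = 0.
Hypothesis hl0u : l0 \is a GRing.unit.
Hypothesis hdenu : 4 * l0 ^+ 3 - c \is a GRing.unit.

Definition E (p : {poly {poly algC}}) : R := (map_poly (horner_alg c) p).[l0].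

Lemma eval2E p : eval2 p l0 c = E p.
Proof. by rewrite /eval2 /E; congr (_.[_]); apply: eq_map_poly. Qed.

Lemma ED p q : E (p + q) = E p + E q.
Proof. by rewrite /E rmorphD hornerD. Qed.
Lemma EM p q : E (p * q) = E p * E q.
Proof. by rewrite /E rmorphM hornerM. Qed.
Lemma EN p : E (- p) = - E p.
Proof. by rewrite /E rmorphN hornerN. Qed.
Lemma EX : E 'X = l0.
Proof. by rewrite /E map_polyX hornerX. Qed.
Lemma Enat k : E k%:R = k%:R.
Proof. by rewrite /E rmorph_nat -polyC_natr hornerC. Qed.
Lemma Ec : E ('X)%:P = c.
Proof. rewrite /E map_polyC hornerC; exact: horner_algX. Qed.
Lemma E0 : E 0 = 0.
Proof. by rewrite /E rmorph0 horner0. Qed.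
Lemma E1 : E 1 = 1.
Proof. by rewrite /E rmorph1 hornerC. Qed.

Lemma D0 : D 0 = 0.
Proof. have h := hDadd 0 0; rewrite addr0 in h; apply: (addrI (D 0)); by rewrite addr0 -h. Qed.
Lemma D1 : D 1 = 0.
Proof. have h := hDmul 1 1; rewrite !mulr1 mul1r in h; apply: (addrI (D 1)); by rewrite addr0 -h. Qed.
Lemma DN x : D (- x) = - D x.
Proof. by apply/eqP; rewrite -subr_eq0 opprK -hDadd addNr D0. Qed.
Lemma DB x y : D (x - y) = D x - D y.
Proof. by rewrite hDadd DN. Qed.
Lemma Dnat k : D k%:R = 0.
Proof. by elim: k => [|k IH]; rewrite ?D0 // -natr1 hDadd IH D1 addr0. Qed.
Lemma DnatM k x : D (k%:R * x) = k%:R * D x.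
Proof. by rewrite hDmul Dnat mul0r add0r. Qed.
Lemma DX x n : D (x ^+ n.+1) = n.+1%:R * x ^+ n * D x.
Proof.
elim: n => [|n IH]; first by rewrite expr1 expr0 mulr1 mul1r.
by rewrite exprS hDmul IH; rewrite !exprS -!natr1; ring.
Qed.
Lemma Dalg q : D (horner_alg c q) = 0.
Proof.
elim/poly_ind: q => [|q a IH]; first by rewrite rmorph0 D0.
rewrite rmorphD rmorphM /= horner_algX horner_algC hDadd hDmul IH hDc.
by rewrite -(mulr1 (a%:A)) -scalerAl mul1r hDscale D1 scaler0 !mul0r !mulr0 !addr0.
Qed.
Lemma DE p : D (E p) = E p^`() * D l0.
Proof.
elim/poly_ind: p => [|p a IH]; first by rewrite deriv0 E0 D0 mul0r.
rewrite derivMXaddC (ED (p * _)) (ED p) !EM EX hDadd hDmul IH.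
rewrite /E map_polyC hornerC Dalg. ring.
Qed.

Definition Dl := 4 * l0 ^+ 3 - c.
Definition w := Dl^-1.
Lemma hw : Dl * w = 1.
Proof. by rewrite /w mulrV. Qed.
Definition Dp : {poly {poly algC}} := 4%:R * 'X^3 - ('X)%:P.
Lemma EXn n : E 'X^n = l0 ^+ n.
Proof. by elim: n => [|n IH]; rewrite ?expr0 ?E1 // !exprS EM EX IH. Qed.
Lemma EDp : E Dp = Dl.
Proof. by rewrite /Dp ED EN EM Enat EXn Ec. Qed.

Lemma hfac : (6 * l0 ^+ 2 + t) * l0 = Dl.
Proof.
apply/eqP; rewrite -subr_eq0; apply/eqP.
have -> : (6 * l0 ^+ 2 + t) * l0 - Dl = 2 * l0 ^+ 3 + t * l0 + c by rewrite /Dl; ring.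
exact: hl0.
Qed.

Lemma Dl0 : D l0 = - (l0 ^+ 2 * w).
Proof.
have h : D (2 * l0 ^+ 3 + t * l0 + c) = 0 by rewrite hl0 D0.
rewrite !hDadd DnatM DX hDmul hDt hDc in h.
have h2 : D l0 * ((6 * l0 ^+ 2 + t) * l0) = - (l0 * l0).
  apply/eqP; rewrite -subr_eq0; apply/eqP; rewrite -[RHS](mulr0 l0) -h; ring.
by rewrite -[D l0]mulr1 -hw -hfac mulrA h2; ring.
Qed.

Lemma DDl : D Dl = 12 * l0 ^+ 2 * D l0.
Proof. rewrite /Dl DB DnatM DX hDc subr0; ring. Qed.

Lemma Dw : D w = - (w ^+ 2 * D Dl).
Proof.
have h : D (Dl * w) = 0 by rewrite hw D1.
rewrite hDmul in h.
rewrite -[D w]mul1r -hw.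
apply/eqP; rewrite -subr_eq0; apply/eqP.
transitivity (w * (D Dl * w + Dl * D w)); first ring.
by rewrite h mulr0.
Qed.

Lemma Dwe e : D (w ^+ e) = - (e%:R * w ^+ e.+1 * D Dl).
Proof.
elim: e => [|e IH]; first by rewrite expr0 D1 mul0r mul0r oppr0.
rewrite exprS hDmul IH Dw -natr1 !exprS; ring.
Qed.

Definition InS (e s : nat) (x : R) :=
  exists p : {poly {poly algC}}, (size p <= s)%N /\ x = E p * w ^+ e.

Lemma InS0 e s : InS e s 0.
Proof. by exists 0; rewrite size_poly0 E0 mul0r. Qed.

Lemma InS_add e s x y : InS e s x -> InS e s y -> InS e s (x + y).
Proof.
move=> [p [hp ->]] [q [hq ->]]; exists (p + q); split.
  by apply: leq_trans (size_polyD _ _) _; rewrite geq_max hp hq.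
by rewrite ED mulrDl.
Qed.

Lemma InS_opp e s x : InS e s x -> InS e s (- x).
Proof. by move=> [p [hp ->]]; exists (- p); rewrite size_polyN EN mulNr. Qed.

Lemma InS_mul e1 s1 e2 s2 x y : InS e1 s1 x -> InS e2 s2 y ->
  InS (e1 + e2) (s1 + s2).-1 (x * y).
Proof.
move=> [p [hp ->]] [q [hq ->]]; exists (p * q); split.
  apply: leq_trans (size_polyMleq _ _) _; lia.
by rewrite EM exprD; ring.
Qed.

Lemma size_natr k : (size (k%:R : {poly {poly algC}}) <= 1)%N.
Proof. by rewrite -polyC_natr size_polyC_leq1. Qed.

Lemma size_Dp : (size Dp <= 4)%N.
Proof.
rewrite /Dp; apply: leq_trans (size_polyD _ _) _; rewrite size_polyN geq_max.
apply/andP; split; last by apply: leq_trans (size_polyC_leq1 _) _.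
apply: leq_trans (size_polyMleq _ _) _; have := size_natr 4; rewrite size_polyXn; by case: (size _) => [|[]].
Qed.

Lemma InS_raise e s x : InS e s x -> InS e.+1 (s + 3) x.
Proof.
move=> [p [hp ->]]; exists (p * Dp); split.
  apply: leq_trans (size_polyMleq _ _) _; have := size_Dp; lia.
rewrite EM EDp -[LHS]mulr1 -hw exprS; ring.
Qed.

Lemma InS_mono e s s' x : (s <= s')%N -> InS e s x -> InS e s' x.
Proof. by move=> h [p [hp ->]]; exists p; split => //; apply: leq_trans h. Qed.

Lemma InS_le e s e' s' x : InS e s x -> (e <= e')%N -> (s + 3 * (e' - e) <= s')%N ->
  InS e' s' x.
Proof.
move=> h he; have [k ->] : exists k, e' = (e + k)%N by exists (e' - e)%N; lia.
elim: k s' => [|k IH] s' hs.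
  by rewrite addn0; apply: (InS_mono _ h); lia.
rewrite addnS; apply: (InS_mono (s := ((s + 3 * k) + 3)%N)); first lia.
apply: InS_raise; apply: IH; lia.
Qed.

Lemma InS_nat k : InS 0 1 k%:R.
Proof. by exists k%:R; rewrite size_natr Enat expr0 mulr1. Qed.
Lemma InS_l0 : InS 0 2 l0.
Proof. by exists 'X; rewrite size_polyX EX expr0 mulr1. Qed.
Lemma InS_l0w : InS 1 2 (l0 * w).
Proof. by exists 'X; rewrite size_polyX EX expr1. Qed.

Lemma size_deriv_le (p : {poly {poly algC}}) : (size p^`() <= (size p).-1)%N.
Proof.
have [->|nz] := eqVneq p 0; first by rewrite deriv0 size_poly0.
have := lt_size_deriv nz; lia.
Qed.

Lemma sz_mul (p q : {poly {poly algC}}) a b n : (size p <= a)%N -> (size q <= b)%N ->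
  ((a + b).-1 <= n)%N -> (size (p * q)%R <= n)%N.
Proof.
move=> hp hq hn; apply: leq_trans (size_polyMleq p q) _; apply: leq_trans hn.
by rewrite -!subn1 leq_sub2r // leq_add.
Qed.
Lemma sz_add (p q : {poly {poly algC}}) n : (size p <= n)%N -> (size q <= n)%N ->
  (size (p + q)%R <= n)%N.
Proof. by move=> hp hq; apply: leq_trans (size_polyD p q) _; rewrite geq_max hp hq. Qed.
Lemma sz_opp (p : {poly {poly algC}}) n : (size p <= n)%N -> (size (- p)%R <= n)%N.
Proof. by rewrite size_polyN. Qed.
Lemma sz_Xn n m : (n < m)%N -> (size ('X^n : {poly {poly algC}}) <= m)%N.
Proof. by rewrite size_polyXn. Qed.
Lemma sz_der (p : {poly {poly algC}}) n : (size p <= n.+1)%N -> (size p^`() <= n)%N.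
Proof. by move=> h; apply: leq_trans (size_deriv_le p) _; rewrite -ltnS; case: (size p) h. Qed.

Lemma InS_D e s x : InS e s x -> InS (e + 2) (s + 4) (D x).
Proof.
move=> [p [hp ->]].
have [->|pnz] := eqVneq p 0.
  by exists 0; rewrite size_poly0 E0 mul0r D0 mul0r.
have := leq_trans (_ : 0 < size p)%N hp; rewrite size_poly_gt0 pnz => /(_ isT); case: s hp => // s hp _.
exists (- (p^`() * 'X^2 * Dp) + (12 * e)%:R * (p * 'X^4)); split.
  apply: sz_add; first apply: sz_opp.
    apply: (sz_mul (a := (s + 2)%N) (b := 4)); last by lia.
      apply: (sz_mul (a := s) (b := 3)); last by lia.
        exact: sz_der.
      exact: sz_Xn.
    exact: size_Dp.
  apply: (sz_mul (a := 1) (b := (s.+1 + 4)%N)); last by lia.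
    exact: size_natr.
  apply: (sz_mul (a := s.+1) (b := 5)); last by lia.
    exact: hp.
  exact: sz_Xn.
rewrite hDmul DE Dwe DDl Dl0 ED EN !EM !EX EDp Enat natrM.
apply/eqP; rewrite -subr_eq0; apply/eqP.
transitivity (E p^`() * l0 ^+ 2 * w ^+ e * w * (Dl * w - 1)).
  rewrite exprD !exprS expr0; ring.
by rewrite hw subrr mulr0.
Qed.


Lemma InS_sum e s k (F : 'I_k -> R) (P : pred 'I_k) :
  (forall i, P i -> InS e s (F i)) -> InS e s (\sum_(i < k | P i) F i).
Proof.
move=> h; apply: (big_ind (InS e s)); [exact: InS0 | exact: InS_add | exact: h].
Qed.

Definition eb a := if a == 0%N then 0%N else (5 * a).-1.
Definition sb a := if a == 0%N then 2%N else (9 * a).-1.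

Lemma arith a b g n : (a + b + g = n)%N -> (a < n)%N -> (b < n)%N -> (g < n)%N ->
  (eb a + eb b + eb g <= (5 * n).-2)%N /\
  (((sb a + sb b).-1 + sb g).-1 + 3 * ((5 * n).-2 - (eb a + eb b + eb g)) <= (9 * n).-2)%N.
Proof.
rewrite /eb /sb.
case: eqP => ha; case: eqP => hb; case: eqP => hg; move=> *; lia.
Qed.

Variable lam : nat -> R.
Hypothesis hlam0 : lam 0%N = l0.
Hypothesis hlamrec : forall k : nat, (0 < k)%N ->
     (6 * l0 ^+ 2 + t) * lam k
       + 2 * (\sum_(i < k) \sum_(j < k) \sum_(m < k | (i + j + m == k)%N)
                lam i * lam j * lam m)
     = (if k is k'.+2 then D (D (lam k')) else 0).

Lemma hinv x : x = l0 * w * ((6 * l0 ^+ 2 + t) * x).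
Proof. by rewrite mulrA [l0 * w * _]mulrC mulrA hfac hw mul1r. Qed.

Lemma evenE i : ~~ odd i -> i = (i./2).*2.
Proof. by move=> ei; rewrite -[LHS]odd_double_half (negbTE ei) add0n. Qed.

Lemma key k : (odd k -> lam k = 0) /\
  (~~ odd k -> (0 < k)%N -> InS (5 * k./2).-1 (9 * k./2).-1 (lam k)).
Proof.
elim/ltn_ind: k => k IH.
have IHo : forall i, (i < k)%N -> odd i -> lam i = 0 by move=> i hi; case: (IH i hi).
have IHe : forall i, (i < k)%N -> ~~ odd i -> InS (eb i./2) (sb i./2) (lam i).
  move=> i hi ei; rewrite /eb /sb; case: eqP => hz.
    have -> : i = 0%N by rewrite (evenE ei) hz.
    by rewrite hlam0; exact: InS_l0.
  case: (IH i hi) => _ /(_ ei); apply; rewrite (evenE ei); lia.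
case: k IH IHo IHe => [|[|k']] IH IHo IHe.
- by split.
- split=> // _; rewrite [lam 1%N]hinv.
  have h := hlamrec (isT : (0 < 1)%N).
  have -> : (6 * l0 ^+ 2 + t) * lam 1%N = - (2 * (\sum_(i < 1) \sum_(j < 1)
       \sum_(m < 1 | (i + j + m == 1)%N) lam i * lam j * lam m)).
    by apply/eqP; rewrite -addr_eq0; apply/eqP.
  rewrite big1 ?mulr0 ?oppr0 ?mulr0 // => i _; rewrite big1 // => j _.
  by rewrite big1 // => m /eqP; have := ltn_ord i; have := ltn_ord j; have := ltn_ord m; lia.
pose S := \sum_(i < k'.+2) \sum_(j < k'.+2) \sum_(m < k'.+2 | (i + j + m == k'.+2)%N) lam i * lam j * lam m.
have hA : (6 * l0 ^+ 2 + t) * lam k'.+2 = D (D (lam k')) - 2 * S.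
  by rewrite -(hlamrec (isT : (0 < k'.+2)%N)) addrK.
split.
- move=> ok; rewrite [lam k'.+2]hinv hA.
  have -> : S = 0.
    rewrite /S big1 // => i _; rewrite big1 // => j _; rewrite big1 // => m /eqP hs.
    have : odd (i + j + m)%N by rewrite hs. rewrite !oddD.
    case: (boolP (odd i)) => oi; first by rewrite (IHo i (ltn_ord i) oi) !mul0r.
    case: (boolP (odd j)) => oj; first by rewrite (IHo j (ltn_ord j) oj) mulr0 mul0r.
    case: (boolP (odd m)) => om //; by rewrite (IHo m (ltn_ord m) om) mulr0.
  have -> : lam k' = 0 by apply: IHo => //; move: ok => /=; rewrite negbK.
  by rewrite !D0 mulr0 subr0 mulr0.
move=> ek _; rewrite [lam k'.+2]hinv hA.
have ek' : ~~ odd k' by move: ek => /=; rewrite negbK.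
rewrite (_ : (k'.+2)./2 = (k'./2).+1) //.
have hk : k' = (k'./2).*2 by exact: evenE.
set a := k'./2 in hk *.
have hDD : InS (5 * a.+1).-2 (9 * a.+1).-2 (D (D (lam k'))).
  case: (posnP k') => hk0.
    have hD1 : InS 1 3 (D (lam k')).
      rewrite hk0 hlam0 Dl0; exists (- 'X^2); split; first by rewrite size_polyN size_polyXn.
      by rewrite EN EXn expr1 mulNr.
    apply: (InS_le (InS_D hD1)); lia.
  have := (IH k' (ltnW (ltnSn _))).2 ek' hk0; rewrite -/a => h.
  apply: (InS_le (InS_D (InS_D h))); lia.
have hSum : InS (5 * a.+1).-2 (9 * a.+1).-2 S.
  rewrite /S; apply: InS_sum => i _; apply: InS_sum => j _; apply: InS_sum => m /eqP hs.
  case: (boolP (odd i)) => oi; first by rewrite (IHo i (ltn_ord i) oi) !mul0r; exact: InS0.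
  case: (boolP (odd j)) => oj; first by rewrite (IHo j (ltn_ord j) oj) mulr0 mul0r; exact: InS0.
  case: (boolP (odd m)) => om; first by rewrite (IHo m (ltn_ord m) om) mulr0; exact: InS0.
  have hi := IHe i (ltn_ord i) oi; have hj := IHe j (ltn_ord j) oj.
  have hm := IHe m (ltn_ord m) om.
  have ei := evenE oi; have ej := evenE oj; have em := evenE om.
  have li := ltn_ord i; have lj := ltn_ord j; have lm := ltn_ord m.
  have [h1 h2] : _ /\ _ := arith (a := i./2) (b := j./2) (g := m./2) (n := a.+1)
     ltac:(lia) ltac:(lia) ltac:(lia) ltac:(lia).
  exact: (InS_le (InS_mul (InS_mul hi hj) hm) h1 h2).
apply: (InS_le (InS_mul InS_l0w (InS_add hDD (InS_opp (InS_le (InS_mul (InS_nat 2) hSum) _ _))))); lia.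
Qed.

Lemma main_sec n : (0 < n)%N ->
    lam (2 * n).-1 = 0 /\
    exists p : {poly {poly algC}},
      (size p <= (9 * n).-1)%N /\
      lam (2 * n)%N = eval2 p l0 c / (4 * l0 ^+ 3 - c) ^+ (5 * n).-1.
Proof.
move=> hn; split.
  apply: (key _).1; rewrite mul2n; case: n hn => // n _.
  by rewrite doubleS /= ?negbK odd_double.
have := (key (2 * n)).2; rewrite mul2n odd_double doubleK => /(_ isT).
case/(_ ltac:(rewrite -mul2n; lia)) => p [hp ->]; exists p; split => //.
by rewrite eval2E /w exprVn.
Qed.
End S.

Theorem mainTheorem3
  (R : comUnitAlgType algC) (D : R -> R)
  (hDadd : forall x y : R, D (x + y) = D x + D y)
  (hDscale : forall (a : algC) (x : R), D (a *: x) = a *: D x)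
  (hDmul : forall x y : R, D (x * y) = D x * y + x * D y)
  (t c l0 : R)
  (hDt : D t = 1) (hDc : D c = 0)
  (hl0 : 2 * l0 ^+ 3 + t * l0 + c = 0)
  (hl0u : l0 \is a GRing.unit)
  (hdenu : 4 * l0 ^+ 3 - c \is a GRing.unit)
  (lam : nat -> R)
  (hlam0 : lam 0%N = l0)
  (hlamrec : forall k : nat, (0 < k)%N ->
     (6 * l0 ^+ 2 + t) * lam k
       + 2 * (\sum_(i < k) \sum_(j < k) \sum_(m < k | (i + j + m == k)%N)
                lam i * lam j * lam m)
     = (if k is k'.+2 then D (D (lam k')) else 0)) :
  forall n : nat, (0 < n)%N ->
    lam (2 * n).-1 = 0 /\
    exists p : {poly {poly algC}},
      (size p <= (9 * n).-1)%N /\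
      lam (2 * n)%N = eval2 p l0 c / (4 * l0 ^+ 3 - c) ^+ (5 * n).-1.
Proof.
move=> n hn; eapply main_sec; eassumption.
Qed.
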